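(* Assume hypotheses (A1)–(A4) below and fix $\sigma\in(0,\infty]$. Then the functionals $\mathcal E_{\sigma,h}$ (restricted to $\mathcal T_\sigma$) $\Gamma$-converge as $h\to0$ in the weak topology of $\mathcal T_\sigma$ to $\overline{\mathcal E}_\sigma$ (i.e. the liminf inequality holds for all weakly convergent sequences, and recovery sequences converge weakly).
   Context: Let $\{\mathcal T_\sigma\}_{\sigma\in\mathbb R\cup\{\pm\infty\}}$ be reflexive Banach spaces with norms $\|\cdot\|_{\mathcal T_\sigma}$, $\mathcal T_{-\sigma}:=\mathcal T_\sigma^*$, and $\mathcal T_\sigma\subset\mathcal T_0$ for $\sigma\in(0,\infty]$. Limits ''as $\sigma\to\infty$'' refer to arbitrary sequences $\sigma_n\to\infty$. (A1) (i) There is $M_1>0$ independent of $\sigma$ with $M_1\|u\|_{\mathcal T_0}\le\|u\|_{\mathcal T_\sigma}$ for all $\sigma\in(0,\infty]$, $u\in\mathcal T_\sigma$. (ii) If $v_\sigma\in\mathcal T_\sigma$ with $\|v_\sigma\|_{\mathcal T_\sigma}\le C$ ($C$ independent of $\sigma$), then $\{v_\sigma\}$ is relatively compact in $\mathcal T_0$ as $\sigma\to\infty$ and each limit point lies in $\mathcal T_\infty$. (A2) For each $\sigma\in(0,\infty]$, $\mathcal E_\sigma:\mathcal T_\sigma\to[0,\infty)$ is weakly lower semicontinuous on $\mathcal T_\sigma$, and: (i) there is $\varphi\in C^0([0,\infty)^2)$ with $|\mathcal E_\sigma(u)-\mathcal E_\sigma(v)|\le\varphi(\|u\|_{\mathcal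 T_\sigma},\|v\|_{\mathcal T_\sigma})\|u-v\|_{\mathcal T_\sigma}$ for all $u,v\in\mathcal T_\sigma$; (ii) there exist $p\in(1,\infty)$, $\alpha>0$, $\psi\in C^0([0,\infty))$ with $\psi(t)/t^p\to0$ as $t\to\infty$, independent of $\sigma$, with $\alpha\|u\|^p_{\mathcal T_\sigma}\le\mathcal E_\sigma(u)+\psi(\|u\|_{\mathcal T_\sigma})$. (A3) With $\overline{\mathcal E}_\sigma:\mathcal T_0\to[0,\infty]$ equal to $\mathcal E_\sigma$ on $\mathcal T_\sigma$ and $+\infty$ on $\mathcal T_0\setminus\mathcal T_\sigma$ ($\sigma\in(0,\infty]$), $\overline{\mathcal E}_\sigma$ $\Gamma$-converges to $\overline{\mathcal E}_\infty$ as $\sigma\to\infty$ in the strong topology of $\mathcal T_0$. (A4) For $\sigma\in(0,\infty]$, $h\in(0,h_0]$, $W_{\sigma,h}\subset\mathcal T_\sigma$ are finite-dimensional subspaces such that for each $h$ the span of $\bigcup_{\sigma\in(0,\infty]}W_{\sigma,h}$ is finite-dimensional, and: (i) for every $\sigma\in(0,\infty]$ and $u\in\mathcal T_\sigma$ there exist $h_n\to0$ and $u_n\in W_{\sigma,h_n}$ with $\|u-u_n\|_{\mathcal T_\sigma}\to0$; (ii) for each $h\in(0,h_0]$, $W_{\infty,h}=\mathcal T_\infty\cap\bigcup_{\sigma\in(0,\infty]}W_{\sigma,h}$; (iii) with $W_{\infty,0}:=\mathcal T_\infty$: for every $h\in[0,h_0]$, every $v\in W_{\infty,h}$ and every sequence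 $(\sigma_n,h_n)$ with $\sigma_n\to\infty$, $h_n\in(0,h_0]$, and $h_n=h$ for all $n$ if $h>0$, $h_n\to0$ if $h=0$, there exist $v_{\sigma_n}\in\mathcal T_{\sigma_n}$ with $\|v_{\sigma_n}-v\|_{\mathcal T_0}\to0$ and $\mathcal E_{\sigma_n}(v_{\sigma_n})\to\mathcal E_\infty(v)$, and $v_n\in W_{\sigma_n,h_n}$ with $\|v_n-v_{\sigma_n}\|_{\mathcal T_{\sigma_n}}\to0$. Define $\mathcal E_{\sigma,h}:\mathcal T_0\to[0,\infty]$ by $\mathcal E_{\sigma,h}=\mathcal E_\sigma$ on $W_{\sigma,h}$ and $+\infty$ on $\mathcal T_0\setminus W_{\sigma,h}$. $\Gamma$-convergence of $I_s$ to $I$ (with respect to a notion of sequential convergence) means: (1) $I(v)\le\liminf I_s(v_s)$ whenever $v_s\to v$; (2) for each $v$ there is $v_s\to v$ with $\limsup I_s(v_s)\le I(v)$. *)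

(* Defs.v *)
From HB Require Import structures.
From mathcomp Require Import all_boot all_order all_algebra.
From mathcomp Require Import all_classical all_reals all_analysis.
Set Implicit Arguments. Unset Strict Implicit. Unset Printing Implicit Defensive.
Import Order.TTheory GRing.Theory Num.Theory.
Import numFieldNormedType.Exports.
Local Open Scope classical_set_scope.
Local Open Scope ring_scope.

(* A "space" T_sigma is modelled as a subset S of the ambient space V = T_0
   together with its own norm N : V -> R (only values on S matter). *)

Definition lin_on (R : realType) (V : normedModType R) (S : set V) (f : V -> R) :=
  forall (a b : R) (x y : V), S x -> S y -> f (a *: x + b *: y) = a * f x + b * f y.

Definition dual_elt (R : realType) (V : normedModType R) (S : set V) (N : V -> R)
  (f : V -> R) :=
  lin_on S f /\ exists C : R, forall x, S x -> `|f x| <= C * N x.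

Definition dual_norm (R : realType) (V : normedModType R) (S : set V) (N : V -> R)
  (f : V -> R) : R :=
  sup [set r : R | exists x, [/\ S x, N x <= 1 & r = `|f x|]].

Definition banach (R : realType) (V : normedModType R) (S : set V) (N : V -> R) :=
  [/\ S 0 /\ (forall (a b : R) x y, S x -> S y -> S (a *: x + b *: y)),
      (forall x, S x -> 0 <= N x /\ (N x = 0 <-> x = 0)),
      (forall (a : R) x, S x -> N (a *: x) = `|a| * N x),
      (forall x y, S x -> S y -> N (x + y) <= N x + N y) &
      (forall u : nat -> V, (forall n, S (u n)) ->
         (forall e : R, 0 < e -> exists M : nat, forall m n : nat,
              (M <= m)%N -> (M <= n)%N -> N (u m - u n) < e) ->
         exists x, S x /\ (fun n => N (u n - x)) @ \oo --> (0 : R))].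

(* (S, N) is a reflexive Banach space: the canonical map into the bidual
   is surjective. *)
Definition refl_banach (R : realType) (V : normedModType R) (S : set V) (N : V -> R) :=
  banach S N /\
  forall Phi : (V -> R) -> R,
    (forall (a b : R) f g, dual_elt S N f -> dual_elt S N g ->
        Phi (fun x => a * f x + b * g x) = a * Phi f + b * Phi g) ->
    (exists C : R, forall f, dual_elt S N f -> `|Phi f| <= C * dual_norm S N f) ->
    exists x, S x /\ forall f, dual_elt S N f -> Phi f = f x.

Definition weak_cvg (R : realType) (V : normedModType R) (S : set V) (N : V -> R)
  (u : nat -> V) (x : V) :=
  [/\ forall n, S (u n), S x &
      forall f, dual_elt S N f -> (fun n => f (u n)) @ \oo --> f x].

Definition gamma_cvg (R : realType) (V : Type) (conv : (nat -> V) -> V -> Prop)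
  (I : nat -> V -> \bar R) (I0 : V -> \bar R) :=
  (forall v_ v, conv v_ v -> (I0 v <= limn_einf (fun n => I n (v_ n)))%E) /\
  (forall v, exists v_, conv v_ v /\ (limn_esup (fun n => I n (v_ n)) <= I0 v)%E).

Definition ext_inf (R : realType) (V : Type) (A : set V) (F : V -> R) (u : V) : \bar R :=
  if pselect (A u) is left _ then (F u)%:E else +oo%E.

Definition strictly_incr (phi : nat -> nat) :=
  forall m n : nat, (m < n)%N -> (phi m < phi n)%N.

Definition span_seq (R : realType) (V : normedModType R) (s : seq V) : set V :=
  [set x | exists c : nat -> R, x = \sum_(i < size s) c i *: s`_i].

Definition findim_subspace (R : realType) (V : normedModType R) (W : set V) :=
  exists s : seq V, W = span_seq s.

(* Main.v *)
Require Import Defs.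
From HB Require Import structures.
From mathcomp Require Import all_boot all_order all_algebra.
From mathcomp Require Import all_classical all_reals all_analysis.
From mathcomp Require Import lra.
Import Order.TTheory GRing.Theory Num.Theory.
Import numFieldNormedType.Exports.
Local Open Scope classical_set_scope.
Local Open Scope ring_scope.


Lemma cvg_bound_aux (R : realType) (x e : nat -> R) (l : R) :
  (forall n, `|x n - l| <= e n) -> e @ \oo --> (0:R) -> x @ \oo --> l.
Proof.
move=> xe /cvgrPdist_le e0; apply/cvgrPdist_le => eps eps0.
have := e0 eps eps0; apply: filterS => n /= h.
rewrite distrC (le_trans (xe n))//; apply: le_trans h.
by rewrite sub0r normrN ler_norm.
Qed.

Lemma limn_einf_le_aux (R : realType) (u v : nat -> \bar R) :
  (forall n, (u n <= v n)%E) -> (limn_einf u <= limn_einf v)%E.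
Proof.
move=> uv; rewrite !limn_einf_lim; apply: lee_lim;
  [exact: is_cvg_einfs|exact: is_cvg_einfs|].
apply: nearW => n; apply: le_ereal_inf_tmp => _ [m /= mn <-].
apply: le_trans (uv m); apply: ereal_inf_lbound; by exists m.
Qed.

Theorem corollary2p11 (R : realType) (V : normedModType R)
  (T : \bar R -> set V) (N : \bar R -> V -> R)
  (E : \bar R -> V -> R)
  (h0 : R) (W : \bar R -> R -> set V)
  (* T_0 = V with its norm; T_sigma (sigma in (0,oo]) reflexive Banach in T_0 *)
  (HT0 : refl_banach [set: V] (fun x => `|x|))
  (HT : forall s : \bar R, (0 < s)%E -> refl_banach (T s) (N s))
  (* (A1)(i) *)
  (HA1i : exists M1 : R, 0 < M1 /\
     forall s : \bar R, (0 < s)%E -> forall u, T s u -> M1 * `|u| <= N s u)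
  (* (A1)(ii) *)
  (HA1ii : forall (sg : nat -> R) (v : nat -> V),
     (forall n, 0 < sg n) -> sg @ \oo --> +oo ->
     (forall n, T (sg n)%:E (v n)) ->
     (exists C : R, forall n, N (sg n)%:E (v n) <= C) ->
     (forall phi, strictly_incr phi -> exists psi, strictly_incr psi /\
         exists w : V, (fun n => v (phi (psi n))) @ \oo --> w) /\
     (forall phi (w : V), strictly_incr phi ->
         (fun n => v (phi n)) @ \oo --> w -> T +oo%E w))
  (* (A2): nonnegativity and (sequential) weak lower semicontinuity *)
  (HA2pos : forall s : \bar R, (0 < s)%E -> forall u, T s u -> 0 <= E s u)
  (HA2lsc : forall s : \bar R, (0 < s)%E -> forall u_ u,
     weak_cvg (T s) (N s) u_ u ->
     ((E s u)%:E <= limn_einf (fun n => (E s (u_ n))%:E))%E)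
  (* (A2)(i) *)
  (HA2i : forall s : \bar R, (0 < s)%E -> exists phi : R -> R -> R,
     {within [set p : R * R | 0 <= p.1 /\ 0 <= p.2],
        continuous (fun p : R * R => phi p.1 p.2)} /\
     forall u v, T s u -> T s v ->
       `|E s u - E s v| <= phi (N s u) (N s v) * N s (u - v))
  (* (A2)(ii) *)
  (HA2ii : exists (p alpha : R) (psi : R -> R), 1 < p /\ 0 < alpha /\
     {within [set t : R | 0 <= t], continuous psi} /\
     (fun t => psi t / powR t p) @ +oo --> (0 : R) /\
     forall s : \bar R, (0 < s)%E -> forall u, T s u ->
       alpha * powR (N s u) p <= E s u + psi (N s u))
  (* (A3) *)
  (HA3 : forall sg : nat -> R, (forall n, 0 < sg n) -> sg @ \oo --> +oo ->
     gamma_cvg (fun (v_ : nat -> V) (v : V) => v_ @ \oo --> v)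
       (fun n => ext_inf (T (sg n)%:E) (E (sg n)%:E))
       (ext_inf (T +oo%E) (E +oo%E)))
  (* (A4) *)
  (Hh0 : 0 < h0)
  (HA4W : forall (s : \bar R) (h : R), (0 < s)%E -> 0 < h <= h0 ->
     W s h `<=` T s /\ findim_subspace (W s h))
  (HA4span : forall h : R, 0 < h <= h0 ->
     exists sp : seq V,
       \bigcup_(s in [set s : \bar R | (0 < s)%E]) W s h `<=` span_seq sp)
  (HA4i : forall s : \bar R, (0 < s)%E -> forall u, T s u ->
     exists (hs : nat -> R) (us : nat -> V),
       [/\ forall n, 0 < hs n <= h0, hs @ \oo --> (0 : R),
           forall n, W s (hs n) (us n) &
           (fun n => N s (u - us n)) @ \oo --> (0 : R)])
  (HA4ii : forall h : R, 0 < h <= h0 ->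
     W +oo%E h = T +oo%E `&` \bigcup_(s in [set s : \bar R | (0 < s)%E]) W s h)
  (HA4iii : forall h : R, 0 <= h <= h0 ->
     forall v, (if h == 0 then T +oo%E v else W +oo%E h v) ->
     forall (sg : nat -> R) (hs : nat -> R),
       (forall n, 0 < sg n) -> sg @ \oo --> +oo ->
       (forall n, 0 < hs n <= h0) ->
       (if h == 0 then hs @ \oo --> (0 : R) else forall n, hs n = h) ->
       exists vs : nat -> V,
         [/\ forall n, T (sg n)%:E (vs n),
             (fun n => `|vs n - v|) @ \oo --> (0 : R),
             (fun n => E (sg n)%:E (vs n)) @ \oo --> E +oo%E v &
             exists vn : nat -> V, (forall n, W (sg n)%:E (hs n) (vn n)) /\
               (fun n => N (sg n)%:E (vn n - vs n)) @ \oo --> (0 : R)])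
  (* the fixed sigma *)
  (s : \bar R) (hs : (0 < s)%E) :
  (* liminf inequality along every h_n -> 0, for weakly convergent sequences in T_s *)
  (forall (hn : nat -> R) (u_ : nat -> V) (u : V),
     (forall n, 0 < hn n <= h0) -> hn @ \oo --> (0 : R) ->
     weak_cvg (T s) (N s) u_ u ->
     (ext_inf (T s) (E s) u <=
        limn_einf (fun n => ext_inf (W s (hn n)) (E s) (u_ n)))%E) /\
  (* recovery sequences, converging weakly in T_s *)
  (forall u : V, T s u ->
     exists (hn : nat -> R) (u_ : nat -> V),
       [/\ forall n, 0 < hn n <= h0, hn @ \oo --> (0 : R),
           weak_cvg (T s) (N s) u_ u &
           (limn_esup (fun n => ext_inf (W s (hn n)) (E s) (u_ n))
              <= ext_inf (T s) (E s) u)%E]).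
Proof.
have [[S0 Slin] Npos Nhom Ntri _] := (HT s hs).1.
split.
  move=> hn u_ u hpos hcvg wc.
  have [Su_ Su _] := wc.
  have -> : ext_inf (T s) (E s) u = (E s u)%:E.
    by rewrite /ext_inf; case: pselect.
  apply: le_trans (HA2lsc s hs _ _ wc) _.
  apply: limn_einf_le_aux => n; rewrite /ext_inf; case: pselect => _ //.
  exact: leey.
move=> u Tu.
have [hs' [us [hpos hcvg Wus Nus]]] := HA4i s hs u Tu.
have Tus n : T s (us n) by exact: ((HA4W s (hs' n) hs (hpos n)).1 _ (Wus n)).
have Sd n : T s (us n - u).
  by have := Slin 1 (-1) (us n) u (Tus n) Tu; rewrite scale1r scaleN1r.
have dE n : N s (us n - u) = N s (u - us n).
  have -> : us n - u = (-1) *: (u - us n) by rewrite scaleN1r opprB.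
  rewrite Nhom; last first.
    by have := Slin 1 (-1) u (us n) Tu (Tus n); rewrite scale1r scaleN1r.
  by rewrite normrN normr1 mul1r.
have dcvg : (fun n => N s (us n - u)) @ \oo --> (0:R).
  by under eq_fun do rewrite dE.
exists hs', us; split => //.
  split => // f [flin [C fC]].
  apply: (@cvg_bound_aux _ _ (fun n => C * N s (us n - u))); last first.
    by rewrite -(mulr0 C); apply: cvgMr.
  move=> n; have := flin 1 (-1) (us n) u (Tus n) Tu.
  rewrite scale1r scaleN1r mul1r mulN1r => <-; exact: fC.
have [phi [phic phiE]] := HA2i s hs.
have Ncvg : (fun n => N s (us n)) @ \oo --> N s u.
  apply: (@cvg_bound_aux _ _ _ _ _ dcvg) => n.
  have Sd' : T s (u - us n).
    by have := Slin 1 (-1) u (us n) Tu (Tus n); rewrite scale1r scaleN1r.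
  have h1 := Ntri _ _ Tu (Sd n); rewrite addrC subrK in h1.
  have h2 := Ntri _ _ (Tus n) Sd'; rewrite addrC subrK -dE in h2.
  rewrite ler_norml; apply/andP; split; lra.
have pc := (subspace_continuousP _ _).1 phic (N s u, N s u).
have Nu0 : 0 <= N s u by have [] := Npos _ Tu.
have /pc {}pc : [set p : R * R | 0 <= p.1 /\ 0 <= p.2] (N s u, N s u) by [].
have qcvg : (fun n => (N s (us n), N s u)) @ \oo --> (N s u, N s u).
  exact: (cvg_pair Ncvg (cvg_cst (N s u))).
have qw : (fun n => (N s (us n), N s u)) @ \oo -->
    within [set p : R * R | 0 <= p.1 /\ 0 <= p.2] (nbhs (N s u, N s u)).
  move=> P; rewrite nbhs_filterE /within /= => hP; have := qcvg _ hP.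
  rewrite !nbhs_filterE /=; apply: filterS => n /=; apply.
  by split => //=; have [] := Npos _ (Tus n).
have pcvg : (fun n => phi (N s (us n)) (N s u)) @ \oo --> phi (N s u) (N s u).
  exact: (cvg_comp _ _ qw pc).
have Ecvg : (fun n => E s (us n)) @ \oo --> E s u.
  apply: (@cvg_bound_aux _ _ (fun n => `|phi (N s (us n)) (N s u)| * N s (us n - u))).
    move=> n; apply: le_trans (phiE _ _ (Tus n) Tu) _.
    by apply: ler_wpM2r; [have [] := Npos _ (Sd n)|exact: ler_norm].
  rewrite -(mulr0 `|phi (N s u) (N s u)|).
  exact: cvgM (cvg_norm pcvg) dcvg.
have -> : ext_inf (T s) (E s) u = (E s u)%:E.
  by rewrite /ext_inf; case: pselect.
have -> : (fun n => ext_inf (W s (hs' n)) (E s) (us n)) = (fun n => (E s (us n))%:E).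
  by apply: funext => n; rewrite /ext_inf; case: pselect => // /(_ (Wus n)).
have EEcvg : (fun n => (E s (us n))%:E) @ \oo --> (E s u)%:E.
  by apply: cvg_EFin; [exact: nearW|exact: Ecvg].
by rewrite (cvg_limn_einf_sup EEcvg).2.
Qed.
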